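(* Let $S$ be a numerical semigroup with multiplicity $e$ and blowup $B$. If ${\rm adj}(S)=\operatorname{Ap}(B;e)$ and $B$ is symmetric, then ${\rm d}_{\max}(S)=d(F(B)+e;B^{\mathcal D})$.
   Context: $S$ is a numerical semigroup (a submonoid of $\mathbb N$ with finite complement) with minimal generators $e<a_1<\dots<a_t$. An $S$-factorization of $n$ is $(c_0,\dots,c_t)\in\mathbb N^{t+1}$ with $c_0e+\sum c_ia_i=n$, of length $\sum c_i$. ${\rm ord}(n;S)$ is the maximal such length, ${\rm d}_{\max}(n;S)$ is the number of factorizations of maximal length, and ${\rm d}_{\max}(S)=\max_{n\in S}{\rm d}_{\max}(n;S)$. ${\rm adj}(S)=\{s-{\rm ord}(s;S)e:s\in S\}$. The blowup is $B=\langle e,d_1,\dots,d_t\rangle$ with $d_i=a_i-e$, and $\mathcal D=(e,d_1,\dots,d_t)$. $d(b;B^{\mathcal D})$ is the number of tuples $(x_0,\dots,x_t)\in\mathbb N^{t+1}$ with $x_0e+\sum x_id_i=b$. $\operatorname{Ap}(B;e)=\{w\in B:w-e\notin B\}$. $F(B)$ is the largest integer not in $B$. $B$ is symmetric if, whenever $x+y=F(B)$ with $x,y\in\mathbb Z$, exactly one of $x,y$ lies in $B$. *)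

(* Defs.v *)
From mathcomp Require Import all_boot all_order all_algebra.
Set Implicit Arguments. Unset Strict Implicit. Unset Printing Implicit Defensive.
Import Order.TTheory GRing.Theory Num.Theory.

Definition num_semigroup (S : nat -> bool) : Prop :=
  [/\ S 0, (forall x y, S x -> S y -> S (x + y)) & exists N, forall n, N <= n -> S n].

Definition min_gen (S : nat -> bool) (x : nat) : Prop :=
  [/\ S x, 0 < x & ~ exists y z, [/\ S y, S z, 0 < y, 0 < z & x = y + z]].

Fixpoint tuples (k n : nat) : seq (seq nat) :=
  match k with
  | 0 => [:: [::]]
  | k'.+1 => [seq x :: t | x <- iota 0 n.+1, t <- tuples k' n]
  end.

Definition dot (c g : seq nat) : nat := sumn [seq p.1 * p.2 | p <- zip c g].

(* Factorizations (c_0,...,c_t) of n with respect to the generator tuple g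
   (all generators positive, so every coordinate is <= n). *)
Definition facts (g : seq nat) (n : nat) : seq (seq nat) :=
  [seq c <- tuples (size g) n | dot c g == n].

Definition nrep (g : seq nat) (n : nat) : nat := size (facts g n).

Definition in_sg (g : seq nat) (n : nat) : bool := 0 < nrep g n.

Definition ord (g : seq nat) (n : nat) : nat := \max_(c <- facts g n) sumn c.

Definition dmax (g : seq nat) (n : nat) : nat :=
  count (fun c => sumn c == ord g n) (facts g n).

Definition is_dmax_S (S : nat -> bool) (g : seq nat) (v : nat) : Prop :=
  (exists2 n, S n & dmax g n = v) /\ (forall n, S n -> dmax g n <= v).

Definition adj (S : nat -> bool) (g : seq nat) (e x : nat) : Prop :=
  exists2 s, S s & x = s - ord g s * e.

Definition apery (B : nat -> bool) (e w : nat) : bool :=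
  B w && ((e <= w) ==> ~~ B (w - e)).

(* generators of the blowup: (e, a_1 - e, ..., a_t - e) *)
Definition blowup_gens (e : nat) (a : seq nat) : seq nat :=
  e :: [seq x - e | x <- a].

Definition inZ (B : nat -> bool) (z : int) : bool :=
  match z with Posz n => B n | Negz _ => false end.

Definition is_frob (B : nat -> bool) (f : int) : Prop :=
  ~~ inZ B f /\ (forall z : int, (f < z)%R -> inZ B z).

Definition symmetric_sg (B : nat -> bool) (f : int) : Prop :=
  forall x y : int, (x + y)%R = f -> inZ B x != inZ B y.

(* d(b; B^D) extended by 0 to negative b *)
Definition nrepZ (g : seq nat) (b : int) : nat :=
  match b with Posz n => nrep g n | Negz _ => 0 end.

(* Main.v *)
Require Import Defs.
From mathcomp Require Import all_boot all_order all_algebra.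
From mathcomp Require Import zify.
Set Implicit Arguments. Unset Strict Implicit. Unset Printing Implicit Defensive.

Lemma dot_cons x c y g : dot (x :: c) (y :: g) = x * y + dot c g.
Proof. by []. Qed.

Lemma tuplesS k n : tuples k.+1 n = [seq x :: t | x <- iota 0 n.+1, t <- tuples k n].
Proof. by []. Qed.

Lemma mem_tuples k n c : (c \in tuples k n) = (size c == k) && all (fun x => x <= n) c.
Proof.
elim: k c => [|k IH] [|x c].
- by rewrite inE.
- by rewrite inE.
- by rewrite tuplesS [RHS]/=; apply/negbTE/negP => /allpairsP [[y t] [_ _ //]].
- rewrite tuplesS [RHS]/= eqSS; apply/allpairsP/idP => [[[y t] [/= Hy Ht [-> ->]]]|/andP[Hs /andP[Hx Ha]]].
  + by move: Ht Hy; rewrite IH -[0 :: iota 1 n]/(iota 0 n.+1) mem_iota => /andP[-> ->] /andP[_]; rewrite add0n ltnS => ->.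
  + exists (x, c); split => //; first by rewrite mem_iota add0n ltnS Hx.
    by rewrite IH Hs.
Qed.

Lemma uniq_tuples k n : uniq (tuples k n).
Proof.
elim: k => [|k IH] //; rewrite tuplesS; apply: allpairs_uniq => //; first exact: iota_uniq.
by move=> [x t] [y u] _ _ /= [-> ->].
Qed.

Lemma dot_ge_entries c g : size c = size g -> all (fun y => 0 < y) g ->
  all (fun x => x <= dot c g) c.
Proof.
elim: c g => [|x c IH] [|y g] //= [Hs] /andP[Hy Hg]; rewrite dot_cons.
apply/andP; split; first by have := leq_pmulr x Hy; lia.
apply/allP => z Hz; have := allP (IH g Hs Hg) z Hz; lia.
Qed.

Lemma mem_facts g n c : all (fun y => 0 < y) g ->
  (c \in facts g n) = (size c == size g) && (dot c g == n).
Proof.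
move=> Hg; rewrite /facts mem_filter mem_tuples.
apply/idP/idP => [/andP[-> /andP[-> _]] //|/andP[/eqP Hs /eqP Hd]].
by rewrite Hd eqxx Hs eqxx /= -Hd; exact: dot_ge_entries.
Qed.

Lemma uniq_facts g n : uniq (facts g n).
Proof. exact/filter_uniq/uniq_tuples. Qed.

Lemma dot_shift cs a e : size cs = size a -> all (fun x => e <= x) a ->
  dot cs a = dot cs [seq x - e | x <- a] + sumn cs * e.
Proof.
elim: cs a => [|x cs IH] [|y a] //= [Hs] /andP[Hy Ha].
rewrite !dot_cons (IH a Hs Ha).
have : x * y = x * (y - e) + x * e by rewrite -mulnDr subnK.
rewrite mulnDl; lia.
Qed.

Lemma sumn_le_dot c g : size c = size g -> all (fun y => 0 < y) g -> sumn c <= dot c g.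
Proof.
elim: c g => [|x c IH] [|y g] //= [Hs] /andP[Hy Hg]; rewrite dot_cons.
have := leq_pmulr x Hy; have := IH g Hs Hg; lia.
Qed.

Lemma dot_nseq0 k g : dot (nseq k 0) g = 0.
Proof. by elim: k g => [|k IH] [|y g] //=; rewrite dot_cons IH. Qed.

Definition addl (s t : seq nat) := [seq p.1 + p.2 | p <- zip s t].

Lemma addl_props s t g : size s = size g -> size t = size g ->
  size (addl s t) = size g /\ dot (addl s t) g = dot s g + dot t g.
Proof.
elim: s t g => [|x s IH] [|y t] [|z g] //= [H1] [H2].
have [A B] := IH t g H1 H2. split; first by rewrite A.
rewrite /addl /= dot_cons. rewrite /addl in B; rewrite B !dot_cons mulnDl; lia.
Qed.

Lemma addl_inj s t u : size s = size u -> size t = size u -> addl s u = addl t u -> s = t.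
Proof.
elim: s t u => [|x s IH] [|y t] [|z u] //= [H1] [H2] [H3 H4].
by rewrite (IH t u H1 H2 H4); congr cons; lia.
Qed.

Lemma nrep_mono g r y : all (fun z => 0 < z) g -> in_sg g y -> nrep g r <= nrep g (r + y).
Proof.
move=> Hg; rewrite /in_sg /nrep; case E: (facts g y) => [|yv ys] // _.
have : yv \in facts g y by rewrite E mem_head.
rewrite mem_facts // => /andP[/eqP Hsy /eqP Hdy].
rewrite -(size_map (fun x => addl x yv)); apply: uniq_leq_size.
- rewrite map_inj_in_uniq ?uniq_facts // => x1 x2.
  by rewrite !mem_facts // => /andP[/eqP H1 _] /andP[/eqP H2 _] E1; apply: (addl_inj _ _ E1); by rewrite ?H1 ?H2 Hsy.
- move=> z /mapP[x]; rewrite mem_facts // => /andP[/eqP Hs /eqP Hd] ->.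
  have [A B] := addl_props Hs Hsy.
  by rewrite mem_facts // A B Hd Hdy !eqxx.
Qed.

Lemma in_sg_add g x y : all (fun z => 0 < z) g -> in_sg g x -> in_sg g y -> in_sg g (x + y).
Proof. move=> Hg Hx Hy; rewrite /in_sg; exact: leq_trans Hx (nrep_mono x Hg Hy). Qed.

Lemma bigmax_attained (T : eqType) (s : seq T) (F : T -> nat) : s != [::] ->
  exists2 x, x \in s & \max_(i <- s) F i = F x.
Proof.
elim: s => [|x s IH] // _; rewrite big_cons.
case: s IH => [|y s] IH.
  by exists x; rewrite ?mem_head // big_nil maxn0.
have [z Hz ->] := IH isT.
case: (leqP (F z) (F x)) => h.
  by exists x; [exact: mem_head |].
by exists z; [rewrite in_cons Hz orbT |].
Qed.

Section Blow.
Variables (e : nat) (a : seq nat).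
Hypotheses (e0 : 0 < e) (Ha : all (fun x => e < x) a).
Let d := [seq x - e | x <- a].

Lemma Ha' : all (fun x => e <= x) a.
Proof. by apply: sub_all Ha => x /ltnW. Qed.

Lemma D_pos : all (fun z => 0 < z) (blowup_gens e a).
Proof. by rewrite /= e0 all_map; apply/allP => x /(allP Ha) /=; rewrite subn_gt0. Qed.

Lemma g_pos : all (fun z => 0 < z) (e :: a).
Proof. by rewrite /= e0; apply/allP => x /(allP Ha) /= h; exact: leq_ltn_trans h. Qed.

Lemma fact_decomp n c : c \in facts (e :: a) n -> exists x cs,
  [/\ c = x :: cs, size cs = size a & n = x * e + dot cs d + sumn cs * e].
Proof.
rewrite mem_facts ?g_pos //; case: c => [|x cs] //= /andP[/eqP [Hs] /eqP Hd].
exists x, cs; split => //; rewrite -Hd dot_cons (dot_shift Hs Ha') /d; lia.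
Qed.

Lemma facts_len n c : c \in facts (e :: a) n -> sumn c * e <= n.
Proof.
move=> /fact_decomp [x [cs [-> _ ->]]] /=; rewrite mulnDl; lia.
Qed.

Lemma ord_le n : ord (e :: a) n * e <= n.
Proof.
rewrite /ord; case E: (facts (e :: a) n) => [|c cs]; first by rewrite big_nil.
have [c' Hc' ->] := @bigmax_attained _ (c :: cs) sumn isT.
by apply: facts_len; rewrite E.
Qed.

Lemma dmax_le n : dmax (e :: a) n <= nrep (blowup_gens e a) (n - ord (e :: a) n * e).
Proof.
rewrite /dmax -size_filter /nrep; set k := ord (e :: a) n.
rewrite -(size_map (fun c => 0 :: behead c)); apply: uniq_leq_size.
- rewrite map_inj_in_uniq; first exact/filter_uniq/uniq_facts.
  move=> c1 c2.
  rewrite [c1 \in _]mem_filter [c2 \in _]mem_filter => /andP[/eqP H1 /fact_decomp [x1 [cs1 [E1 _ _]]]].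
  move=> /andP[/eqP H2 /fact_decomp [x2 [cs2 [E2 _ _]]]].
  rewrite E1 E2 /= => -[Ecs]; move: H1 H2; rewrite E1 E2 /= Ecs => H1 H2.
  by congr cons; lia.
- move=> z /mapP[c]; rewrite [c \in _]mem_filter => /andP[/eqP Hk /fact_decomp [x [cs [E Hs Hn]]]] ->.
  rewrite E /= mem_facts ?D_pos //= size_map Hs eqxx /= dot_cons mul0n add0n.
  have : k * e = x * e + sumn cs * e by rewrite -Hk E /= mulnDl.
  rewrite /d in Hn; move=> H; apply/eqP; lia.
Qed.

Lemma in_sg_e : in_sg (blowup_gens e a) e.
Proof.
rewrite /in_sg /nrep -has_predT; apply/hasP; exists (1 :: nseq (size a) 0) => //.
by rewrite mem_facts ?D_pos //= size_nseq size_map eqxx /= dot_cons dot_nseq0 mul1n addn0.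
Qed.

Lemma in_sg_me m : in_sg (blowup_gens e a) (m * e).
Proof.
elim: m => [|m IH].
  by rewrite /in_sg /nrep -has_predT; apply/hasP; exists (nseq (size a).+1 0) => //;
     rewrite mem_facts ?D_pos //= size_nseq size_map eqxx /= dot_cons dot_nseq0.
by rewrite mulSn; apply: in_sg_add; [exact: D_pos|exact: in_sg_e|].
Qed.

End Blow.

Lemma inZ_neg (B : nat -> bool) (z : int) : (z < 0)%R -> inZ B z = false.
Proof. case: z => [n|n] //= h; exfalso; lia. Qed.

Lemma zL1 (F : int) (e : nat) : 0 < e -> (F < F + e%:Z)%R.
Proof. lia. Qed.
Lemma zL2 (F : int) (e w : nat) : (F + e%:Z)%R = Posz w -> e <= w -> F = Posz (w - e).
Proof. lia. Qed.
Lemma zL3 (r e : nat) : e <= r -> (r%:Z - e%:Z)%R = Posz (r - e).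
Proof. lia. Qed.
Lemma zL4 (r e : nat) : r < e -> (r%:Z - e%:Z < 0)%R.
Proof. lia. Qed.
Lemma zL5 (F : int) (e w r : nat) : (F + e%:Z)%R = Posz w -> (r%:Z - e%:Z + (w%:Z - r%:Z))%R = F.
Proof. lia. Qed.

Theorem corollary4p5 (S : nat -> bool) (e : nat) (a : seq nat) (F : int) :
  num_semigroup S ->
  sorted ltn (e :: a) ->
  (forall x, x \in e :: a <-> min_gen S x) ->
  is_frob (in_sg (blowup_gens e a)) F ->
  (forall x, adj S (e :: a) e x <-> apery (in_sg (blowup_gens e a)) e x) ->
  symmetric_sg (in_sg (blowup_gens e a)) F ->
  is_dmax_S S (e :: a) (nrepZ (blowup_gens e a) (F + (e : int))%R).
Proof.
move=> [S0 Sadd _] Hsort Hgen [HFn HFgt] Hadj Hsym.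
have [Se e0 _] := (Hgen e).1 (mem_head _ _).
have Ha : all (fun x => e < x) a := order_path_min ltn_trans Hsort.
have HDP := D_pos e0 Ha.
have := HFgt _ (zL1 F e0).
case Hw: (F + e%:Z)%R => [w|w] //= Bw.
have HwAp : apery (in_sg (blowup_gens e a)) e w.
  rewrite /apery Bw /=; apply/implyP => hew.
  by move: HFn; rewrite (zL2 Hw hew).
have Hle : forall r, apery (in_sg (blowup_gens e a)) e r ->
    nrep (blowup_gens e a) r <= nrep (blowup_gens e a) w.
  move=> r /andP[Br Hr].
  have Hx : inZ (in_sg (blowup_gens e a)) (r%:Z - e%:Z)%R = false.
    case: (leqP e r) => h.
      by rewrite (zL3 h) /= (negbTE (implyP Hr h)).
    exact/inZ_neg/zL4.
  have Hy : inZ (in_sg (blowup_gens e a)) (w%:Z - r%:Z)%R.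
    by move: (Hsym _ _ (zL5 r Hw)); rewrite Hx; case: inZ.
  case: (leqP r w) => h.
    rewrite (zL3 h) /= in Hy; rewrite -(subnKC h); exact: nrep_mono.
  by rewrite inZ_neg in Hy => //; exact: zL4.
have Hup : forall n, S n -> dmax (e :: a) n <= nrep (blowup_gens e a) w.
  move=> n Sn; apply: leq_trans (dmax_le e0 Ha n) _; apply: Hle; apply/(Hadj _).1.
  by exists n.
have [s Ss Hws] := (Hadj w).2 HwAp.
have Hos := ord_le e0 Ha s.
pose K := ord (e :: a) s + w.
pose n := s + w * e.
have HnK : n = w + K * e.
  rewrite /n /K mulnDl; move: Hos Hws; clear; lia.
have Sme : forall m, S (m * e).
  by elim=> [|m IH]; [exact: S0 | rewrite mulSn; exact: Sadd].
have Sn : S n := Sadd _ _ Ss (Sme w).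
have HdP : all (fun z => 0 < z) [seq y - e | y <- a] by case/andP: HDP.
have Hfw : forall x, x \in facts (blowup_gens e a) w -> exists xs,
    [/\ x = 0 :: xs, size xs = size a & dot xs [seq y - e | y <- a] = w].
  move=> x; rewrite mem_facts //; case: x => [|x0 xs] //= /andP[/eqP[Hs] /eqP Hd].
  rewrite size_map in Hs; rewrite dot_cons in Hd.
  case: x0 Hd => [|x0] Hd; first by exists xs; split => //; rewrite -Hd mul0n add0n.
  exfalso; move: HwAp; rewrite /apery => /andP[_ /implyP H].
  have hew : e <= w by rewrite -Hd mulSn; clear; lia.
  have := H hew; move/negP; apply.
  rewrite /in_sg /nrep -has_predT; apply/hasP; exists (x0 :: xs) => //.
  rewrite mem_facts //= size_map Hs eqxx dot_cons; apply/eqP; rewrite mulSn in Hd.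
  move: Hd; clear; lia.
have [x1 Hx1] : exists x, x \in facts (blowup_gens e a) w.
  by move: Bw; rewrite /in_sg /nrep; case E: (facts _ w) => [|x1 xs1] // _; exists x1; rewrite mem_head.
pose f := fun x : seq nat => (K - sumn (behead x)) :: behead x.
have Hf : forall x, x \in facts (blowup_gens e a) w ->
    f x \in facts (e :: a) n /\ sumn (f x) = K.
  move=> x /Hfw [xs [-> Hs Hd]]; rewrite /f /=.
  have Hsl : sumn xs <= w by rewrite -Hd; apply: sumn_le_dot => //; rewrite size_map.
  split; first last.
    by rewrite /K; move: Hsl; clear; lia.
  rewrite mem_facts ?g_pos //= Hs eqxx dot_cons (dot_shift Hs (Ha' Ha)) Hd.
  have : (K - sumn xs) * e + sumn xs * e = K * e.
    by rewrite -mulnDl subnK // /K; move: Hsl; clear; lia.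
  move=> H; apply/eqP; move: H HnK; clear; lia.
have Hord : ord (e :: a) n = K.
  have [c Hc Hcord] : exists2 c, c \in facts (e :: a) n & ord (e :: a) n = sumn c.
    rewrite /ord; apply: bigmax_attained.
    by have := (Hf x1 Hx1).1; case: (facts _ n).
  apply/eqP; rewrite eqn_leq; apply/andP; split; last first.
    have [Hin HK] := Hf x1 Hx1; rewrite -{1}HK /ord; exact: leq_bigmax_seq Hin isT.
  rewrite leqNgt; apply/negP => hK.
  have Hke : ord (e :: a) n * e <= n := ord_le e0 Ha n.
  have Hap : apery (in_sg (blowup_gens e a)) e (n - ord (e :: a) n * e).
    by apply/(Hadj _).1; exists n.
  move: Hap => /andP [Br _].
  set k := ord (e :: a) n in hK Hke Br.
  have Bj := in_sg_me e0 Ha (k - K - 1).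
  have Hk : k = K + (k - K - 1) + 1 by move: hK; clear; lia.
  have Hke2 : k * e = K * e + (k - K - 1) * e + 1 * e by rewrite -!mulnDl -Hk.
  rewrite mul1n in Hke2.
  have Hsum1 : n - k * e + (k - K - 1) * e = w - e.
    move: Hke2 Hke HnK; move: (k * e) ((k - K - 1) * e) (K * e) => p q r; clear; lia.
  have Hsum2 : e <= w.
    move: Hke2 Hke HnK; move: (k * e) ((k - K - 1) * e) (K * e) => p q r; clear; lia.
  have := in_sg_add HDP Br Bj; rewrite Hsum1.
  move: HwAp => /andP[_ /implyP H]; have := H Hsum2; by move/negP.
have Hlow : nrep (blowup_gens e a) w <= dmax (e :: a) n.
  rewrite /dmax -size_filter /nrep -(size_map f); apply: uniq_leq_size.
  - rewrite map_inj_in_uniq ?uniq_facts // => x y /Hfw[xs [-> _ _]] /Hfw[ys [-> _ _]] /= [_ ->] //.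
  - move=> z /mapP[x Hx ->]; have [H1 H2] := Hf x Hx.
    by rewrite mem_filter Hord H2 eqxx H1.
split; last exact: Hup.
by exists n => //; apply/eqP; rewrite eqn_leq (Hup n Sn) Hlow.
Qed.
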